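(* Let $\mathcal{G}=(\mathcal{N},\mathcal{E})$ be a finite simple undirected graph with vertex set $\mathcal{N}=\{1,\dots,N\}$. Let $\mathbb{T}^N=(\mathbb{R}/2\pi\mathbb{Z})^N$ and $$\mathbb{T}^N_0(\mathcal{G}):=\{\theta=(\theta_1,\dots,\theta_N)\in\mathbb{T}^N:\ \theta_i\neq\theta_j \text{ for all } \{i,j\}\in\mathcal{E}\},$$ and let $R_0(\mathcal{G})$ denote the number of connected components of $\mathbb{T}^N_0(\mathcal{G})$. Then: (i) if $\mathcal{G}=T$ is a tree on $N\ge 1$ vertices, $R_0(T)=1$; (ii) if $\mathcal{G}=C_N$ is the cycle graph on $N\ge 3$ vertices, $R_0(C_N)=N-1$.
   Context: $\mathbb{T}^N_0(\mathcal{G})$ is the configuration space of $N$ agents on the circle in which agents joined by an edge of $\mathcal{G}$ never coincide (the region left forward-invariant by repulsive couplings with barriers at zero separation). The cycle graph $C_N$ has edges $\{k,k+1\}$ for $k=1,\dots,N-1$ and $\{N,1\}$. *)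

(* Defs.v *)
From HB Require Import structures.
From mathcomp Require Import all_boot all_order all_algebra.
From mathcomp Require Import all_classical all_reals all_analysis.
Set Implicit Arguments. Unset Strict Implicit. Unset Printing Implicit Defensive.
Import Order.TTheory GRing.Theory Num.Theory.
Import numFieldNormedType.Exports.
Local Open Scope classical_set_scope.
Local Open Scope ring_scope.

Definition simple_graph (N : nat) (e : rel 'I_N) : Prop :=
  irreflexive e /\ symmetric e.

Definition graph_connected (N : nat) (e : rel 'I_N) : Prop :=
  forall i j : 'I_N, connect e i j.

Definition acyclic (N : nat) (e : rel 'I_N) : Prop :=
  forall c : seq 'I_N, (3 <= size c)%N -> ~ ucycle e c.

Definition is_tree (N : nat) (e : rel 'I_N) : Prop :=
  graph_connected e /\ acyclic e.

(* The cycle graph C_N: edges {k, k+1 mod N} (0-based labelling). *)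
Definition cycle_graph (N : nat) : rel 'I_N :=
  fun i j => (val j == (val i).+1 %% N)%N || (val i == (val j).+1 %% N)%N.

(* The circle R/2piZ, realised (homeomorphically) as the unit circle in R^2. *)
Definition circle (R : realType) : set (R * R)%type :=
  [set p | p.1 ^+ 2 + p.2 ^+ 2 = 1].

(* The configuration space T^N_0(G) inside the torus T^N = (S^1)^N,
   itself a subspace of (R^2)^N with the product topology. *)
Definition config_space (R : realType) (N : nat) (e : rel 'I_N)
  : set {ptws 'I_N -> (R * R)%type} :=
  [set th | (forall i, @circle R (th i)) /\
            (forall i j, e i j -> th i <> th j)].

Definition components (T : topologicalType) (A : set T) : set (set T) :=
  [set connected_component A x | x in A].
Arguments cycle_graph N : clear implicits.
Arguments config_space R {N} e.

(* Main.v *)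
Require Import Defs.
From HB Require Import structures.
From mathcomp Require Import all_boot all_order all_algebra.
From mathcomp Require Import all_classical all_reals all_analysis.
From mathcomp Require Import ring lra zify.
Import Order.TTheory GRing.Theory Num.Theory.
Import numFieldNormedType.Exports.
Local Open Scope classical_set_scope.
Local Open Scope ring_scope.
Set Implicit Arguments. Unset Strict Implicit. Unset Printing Implicit Defensive.

Section Trig.
Variable R : realType.
Implicit Types (a b y h : R) (p q : (R * R)%type).

Definition ang a : (R * R)%type := (cos a, sin a).
Definition arg0 p : R := pi - 2 * atan (p.2 / (1 - p.1)).

Lemma arg0_gt0 p : 0 < arg0 p.
Proof. rewrite /arg0; have := atan_ltpi2 (p.2 / (1 - p.1)); lra. Qed.

Lemma arg0_lt p : arg0 p < pi *+ 2.
Proof. rewrite /arg0 mulr2n; have := atan_gtNpi2 (p.2 / (1 - p.1)); lra. Qed.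

Lemma sin_pihalfB h : sin (pi / 2 - h) = cos h.
Proof. by rewrite -opprB sinN sinBpihalf opprK. Qed.

Lemma cos_pihalfB h : cos (pi / 2 - h) = sin h.
Proof. by rewrite -opprB cosN cosBpihalf. Qed.

Lemma e3_alg (s c : R) : s != 0 ->
  (c * s) *+ 2 / (s ^+ 2 *+ 2) = c / s.
Proof.
move=> s0.
have -> : (c * s) *+ 2 = c / s * (s ^+ 2 *+ 2).
  by rewrite mulrnAr expr2 mulrA divfK.
by rewrite mulfK // mulrn_eq0 /= expf_eq0 /=.
Qed.

Lemma arg0_ang y : 0 < y < pi *+ 2 -> arg0 (ang y) = y.
Proof.
move=> /andP[y0 y2]; rewrite /arg0 /ang.
change (pi - 2 * atan (sin y / (1 - cos y)) = y).
have [h [yh h0 hpi]] : exists h, [/\ y = h *+ 2, 0 < h & h < pi].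
  exists (y / 2); split; first by rewrite mulr2n -splitr.
    by rewrite divr_gt0.
  by move: y2; rewrite mulr2n; lra.
have sh : 0 < sin h by apply: sin_gt0_pi; rewrite h0 hpi.
have -> : sin y / (1 - cos y) = tan (pi / 2 - h).
  rewrite /tan sin_pihalfB cos_pihalfB yh sin_mulr2n cos_mulr2n.
  have := cos2Dsin2 h => e.
  have -> : 1 - (cos h ^+ 2 *+ 2 - 1) = (sin h ^+ 2) *+ 2.
    rewrite !mulr2n; lra.
  by rewrite e3_alg // gt_eqF.
rewrite tanK; first by rewrite yh mulr2n mulrBr [2 * (pi / 2)]mulrC divfK ?pnatr_eq0 //; lra.
rewrite in_itv /=; apply/andP; split; lra.
Qed.

End Trig.

Lemma e1_alg (R : realFieldType) (x y : R) : x ^+ 2 + y ^+ 2 = 1 -> 1 - x != 0 ->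
  1 + (y / (1 - x)) ^+ 2 = 2 / (1 - x).
Proof.
move=> cxy k0; rewrite expr_div_n.
have -> : y ^+ 2 = 1 - x ^+ 2 by rewrite -cxy; ring.
by field.
Qed.

Lemma e2_alg (R : realFieldType) (x y : R) : 1 - x != 0 ->
  (y / (1 - x)) * ((1 - x) / 2) * 2 = y.
Proof. by move=> k0; field. Qed.

Section Trig2.
Variable R : realType.
Implicit Types (a b y h : R) (p q : (R * R)%type).

Lemma ang_arg0 p : @circle R p -> p.1 != 1 -> ang (arg0 p) = p.
Proof.
case: p => x y cxy x1.
have {}cxy : x ^+ 2 + y ^+ 2 = 1 := cxy.
have {}x1 : x != 1 := x1.
change ((cos (pi - 2 * atan (y / (1 - x))), sin (pi - 2 * atan (y / (1 - x)))) = (x, y)).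
have k0 : 1 - x != 0 by rewrite subr_eq0 eq_sym.
have e1 := e1_alg cxy k0.
have e2 := e2_alg y k0.
move: e1 e2; set u := y / (1 - x) => e1 e2.
have ct : cos (atan u) ^+ 2 = (1 - x) / 2.
  rewrite cos_atan exprVn sqr_sqrtr; last by rewrite addr_ge0 // sqr_ge0.
  by rewrite e1 invf_div.
have cne : cos (atan u) != 0.
  by rewrite cos_atan invr_eq0 gt_eqF // sqrtr_gt0 ltr_wpDr // sqr_ge0.
have st : sin (atan u) = u * cos (atan u).
  by transitivity (tan (atan u) * cos (atan u)); [rewrite /tan divfK|rewrite atanK].
move: ct st; move: (atan u) => t ct st.
rewrite mulr_natl cosB sinB cospi sinpi cos_mulr2n sin_mulr2n ct st.
congr (_, _).
  by rewrite mul0r addr0 mulN1r mulr2n -splitr; ring.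
by rewrite mul0r sub0r mulN1r opprK mulrCA -expr2 ct -mulr_natr e2.
Qed.
End Trig2.

Section Rel.
Variable R : realType.
Implicit Types (a b d y h : R) (p q : (R * R)%type).

Definition relp p q : (R * R)%type := (p.1 * q.1 + p.2 * q.2, p.1 * q.2 - p.2 * q.1).

Lemma circle_ang a : @circle R (ang a).
Proof. exact: cos2Dsin2. Qed.

Lemma rel_ang a b : relp (ang a) (ang b) = ang (b - a).
Proof.
rewrite /relp /ang; change ((cos a * cos b + sin a * sin b, cos a * sin b - sin a * cos b) = (cos (b - a), sin (b - a))).
by rewrite cosB sinB; congr (_, _); ring.
Qed.

Lemma rel_circle p q : @circle R p -> @circle R q -> @circle R (relp p q).
Proof.
case: p q => [p1 p2] [q1 q2]; rewrite /circle /relp => /= hp hq.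
have -> : (p1 * q1 + p2 * q2) ^+ 2 + (p1 * q2 - p2 * q1) ^+ 2 =
  (p1 ^+ 2 + p2 ^+ 2) * (q1 ^+ 2 + q2 ^+ 2) by ring.
by rewrite hp hq mulr1.
Qed.

Lemma rel_rot p q : @circle R p ->
  q = (p.1 * (relp p q).1 - p.2 * (relp p q).2, p.2 * (relp p q).1 + p.1 * (relp p q).2).
Proof.
case: p q => [p1 p2] [q1 q2]; rewrite /circle /relp => /= hp.
congr (_, _).
  have -> : p1 * (p1 * q1 + p2 * q2) - p2 * (p1 * q2 - p2 * q1) = q1 * (p1 ^+ 2 + p2 ^+ 2) by ring.
  by rewrite hp mulr1.
have -> : p2 * (p1 * q1 + p2 * q2) + p1 * (p1 * q2 - p2 * q1) = q2 * (p1 ^+ 2 + p2 ^+ 2) by ring.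
by rewrite hp mulr1.
Qed.

Lemma rot_rel a d q : @circle R q -> relp (ang a) q = ang d -> q = ang (a + d).
Proof.
move=> _ e; rewrite [LHS](rel_rot q (circle_ang a)) e /ang cosD sinD.
by congr (_, _); ring.
Qed.

Lemma rel_eq1 p q : @circle R p -> @circle R q -> (relp p q).1 = 1 -> p = q.
Proof.
move=> cp cq r1.
have cr := rel_circle cp cq.
have r2 : (relp p q).2 = 0.
  have e : (relp p q).1 ^+ 2 + (relp p q).2 ^+ 2 = 1 := cr.
  move: e; rewrite r1 => e.
  have : (relp p q).2 ^+ 2 = 0 by move: e; rewrite expr1n; lra.
  by move/eqP; rewrite sqrf_eq0 => /eqP.
rewrite [RHS](rel_rot q cp) r1 r2 !mulr0 !mulr1 subr0 addr0.
by case: p {cp r1 r2 cr}.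
Qed.

Lemma ang_exists p : @circle R p -> exists a, ang a = p.
Proof.
move=> cp; have [p1|p1] := eqVneq p.1 1; last by exists (arg0 p); exact: ang_arg0.
exists 0; rewrite /ang cos0 sin0.
have p2 : p.2 = 0.
  have e : p.1 ^+ 2 + p.2 ^+ 2 = 1 := cp.
  move: e; rewrite p1 expr1n => e.
  have : p.2 ^+ 2 = 0 by move: e; lra.
  by move/eqP; rewrite sqrf_eq0 => /eqP.
by case: p p1 p2 {cp} => x y /= -> ->.
Qed.

Lemma ang_periodn a n : ang (a + pi *+ 2 * n%:R) = ang a.
Proof.
by rewrite /ang mulr_natr (periodicn (@cosD2pi R)) (periodicn (@sinD2pi R)).
Qed.

Lemma ang_period a (k : int) : ang (a + pi *+ 2 * k%:~R) = ang a.
Proof.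
case: k => n; first exact: ang_periodn.
rewrite NegzE intrN mulrN.
have := ang_periodn (a - pi *+ 2 * (n.+1)%:R) n.+1; rewrite subrK.
by move=> ->.
Qed.

Lemma cos_neq1 y : 0 < y < pi *+ 2 -> cos y != 1.
Proof.
move=> hy; apply/negP => /eqP c1.
have s0 : sin y = 0.
  have := cos2Dsin2 y; rewrite c1 expr1n => e.
  have : sin y ^+ 2 = 0 by move: e; lra.
  by move/eqP; rewrite sqrf_eq0 => /eqP.
have := arg0_ang hy; rewrite /arg0 /ang.
change (pi - 2 * atan (sin y / (1 - cos y)) = y -> False).
rewrite s0 mul0r atan0 mulr0 subr0 => py.
by move: c1; rewrite -py cospi; lra.
Qed.

Lemma arg0_ang_mod a : cos a != 1 -> exists k : int, arg0 (ang a) = a + pi *+ 2 * k%:~R.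
Proof.
move=> ca; set T := pi *+ 2.
have T0 : 0 < T by rewrite /T mulr2n; have := pi_gt0 R; lra.
exists (- Num.floor (a / T)).
have := floor_itv (a / T); rewrite intrD => /andP[f1 f2].
have h1 : 0 <= a + T * (- Num.floor (a / T))%:~R.
  rewrite intrN mulrN subr_ge0 mulrC -ler_pdivlMr //.
have h2 : a + T * (- Num.floor (a / T))%:~R < T.
  have f2' : a < ((Num.floor (a / T))%:~R + 1) * T by rewrite -ltr_pdivrMr.
  rewrite intrN mulrN; move: f2'; rewrite mulrDl mul1r [_ * T]mulrC; lra.
rewrite -(ang_period a (- Num.floor (a / T))) arg0_ang //.
rewrite h2 andbT lt_neqAle h1 andbT; apply: contra ca => /eqP e.
by rewrite -[cos a]/((ang a).1) -(ang_period a (- Num.floor (a / T))) -e /ang cos0.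
Qed.

End Rel.

Lemma ptws_continuous (X : topologicalType) (I : Type) (V : topologicalType)
  (f : X -> {ptws I -> V}) :
  (forall i, continuous (fun x => f x i)) -> continuous f.
Proof.
move=> cf x; apply/cvg_sup => i.
exact: (@continuous_comp_initial _ X V (fun g : {ptws I -> V} => g i) f (cf i)).
Qed.

Section Conv.
Variable R : realType.

Definition Psi (N : nat) (a : 'I_N -> R) : {ptws 'I_N -> (R * R)%type} :=
  fun i => ang (a i).

Lemma ang_continuous (g : R -> R) : continuous g -> continuous (fun s => ang (g s)).
Proof.
move=> cg s; rewrite /ang.
apply: (@cvg_pair _ _ _ (nbhs s) (nbhs (cos (g s))) (nbhs (sin (g s))) _ _ _ (fun x => cos (g x)) (fun x => sin (g x))).
  exact: (continuous_comp (cg s) (@continuous_cos R (g s))).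
exact: (continuous_comp (cg s) (@continuous_sin R (g s))).
Qed.

Lemma conv_connected (N : nat) (U : set ('I_N -> R)) :
  (forall a b, U a -> U b -> forall s, 0 <= s <= 1 ->
     U (fun i => (1 - s) * a i + s * b i)) ->
  connected (@Psi N @` U).
Proof.
move=> convU.
have [->|/set0P[a0 Ua0]] := eqVneq U set0; first by rewrite image_set0; exact: connected0.
pose gam (b : 'I_N -> R) (s : R) := @Psi N (fun i => (1 - s) * a0 i + s * b i).
have -> : @Psi N @` U = \bigcup_(b in U) (gam b @` `[0, 1]).
  apply/seteqP; split.
    move=> _ [b Ub <-]; exists b => //; exists 1.
      by rewrite set_itvcc /= lexx ler01.
    rewrite /gam; suff -> : (fun i => (1 - 1) * a0 i + 1 * b i) = b by [].
    by apply/funext => i; rewrite subrr mul0r add0r mul1r.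
  move=> x [b Ub [s]]; rewrite set_itvcc /= => s01 <-.
  by exists (fun i => (1 - s) * a0 i + s * b i) => //; apply: convU.
apply: bigcup_connected.
  exists (Psi a0) => b Ub; exists 0; first by rewrite set_itvcc /= lexx ler01.
  rewrite /gam; suff -> : (fun i => (1 - 0) * a0 i + 0 * b i) = a0 by [].
  by apply/funext => i; rewrite subr0 mul1r mul0r addr0.
move=> b Ub; apply: connected_continuous_connected; first exact: segment_connected.
apply: continuous_subspaceT; apply: ptws_continuous => i.
rewrite /gam /Psi; apply: ang_continuous => s.
apply: cvgD; apply: cvgM; (try exact: cvg_cst).
apply: cvgB; [exact: cvg_cst|exact: cvg_id].
exact: cvg_id.
Qed.

End Conv.

Lemma conv_itv (R : realType) (lo hi x y s : R) : lo < x < hi -> lo < y < hi -> 0 <= s <= 1 ->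
  lo < (1 - s) * x + s * y < hi.
Proof.
move=> /andP[x1 x2] /andP[y1 y2] /andP[s0 s1].
have [->|sn1] := eqVneq s 1; first by rewrite subrr mul0r add0r mul1r y1 y2.
have s1' : 0 < 1 - s by rewrite subr_gt0 lt_neqAle sn1 s1.
have a1 : 0 < x - lo by rewrite subr_gt0.
have a2 : 0 < hi - x by rewrite subr_gt0.
have a3 : 0 <= y - lo by rewrite subr_ge0 ltW.
have a4 : 0 <= hi - y by rewrite subr_ge0 ltW.
have h1 := mulr_gt0 s1' a1.
have h2 := mulr_gt0 s1' a2.
have h3 := mulr_ge0 s0 a3.
have h4 := mulr_ge0 s0 a4.
apply/andP; split; nra.
Qed.

Lemma ang_eq_cos (R : realType) (x y : R) : ang x = ang y -> cos (x - y) = 1.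
Proof.
move=> h; have c : cos x = cos y by move: h => [].
have s : sin x = sin y by move: h => [].
by rewrite cosB c s -!expr2 cos2Dsin2.
Qed.

Lemma cycle_mkseq (T : eqType) (e : rel T) (f : nat -> T) n :
  (forall k, (k < n)%N -> e (f k) (f k.+1)) -> e (f n) (f 0%N) -> cycle e (mkseq f n.+1).
Proof.
move=> hp hc.
have -> : mkseq f n.+1 = f 0%N :: mkseq (fun k => f k.+1) n.
  by rewrite /mkseq /= -[in LHS](addn0 1%N) iotaDl -map_comp.
rewrite /= rcons_path; apply/andP; split.
  apply/(pathP (f 0%N)) => i; rewrite size_mkseq => lt_in.
  rewrite nth_mkseq //; case: i lt_in => [|i] lt_in /=; first exact: hp.
  by rewrite nth_mkseq ?(ltn_trans _ lt_in) //; apply: hp.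
rewrite -nth_last size_mkseq; case: n hp hc => [|n] hp hc //=.
by rewrite nth_mkseq.
Qed.

Section Tree.
Variables (N : nat) (e : rel 'I_N) (r : 'I_N).
Hypotheses (eirr : irreflexive e) (esym : symmetric e)
  (econn : forall i j, connect e i j) (eacyc : acyclic e).

Definition layer n : {set 'I_N} :=
  iter n (fun S => S :|: [set y | [exists x in S, e x y]]%SET) [set r]%SET.

Lemma layer0 y : (y \in layer 0) = (y == r).
Proof. by rewrite /layer /= inE. Qed.

Lemma layerS n y : (y \in layer n.+1) = (y \in layer n) || [exists x in layer n, e x y].
Proof. by rewrite /layer iterS -/(layer n) !inE. Qed.

Lemma layer_path p x n : x \in layer n -> path e x p -> last x p \in layer (n + size p).
Proof.
elim: p x n => [|y p IH] x n /=; first by rewrite addn0.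
move=> xn /andP[exy pp].
have yn : y \in layer n.+1.
  by rewrite layerS; apply/orP; right; apply/existsP; exists x; rewrite xn exy.
by rewrite addnS -addSn; exact: IH.
Qed.

Lemma reach v : exists n, v \in layer n.
Proof.
have /connectP [p pp ->] := econn r v; exists (0 + size p)%N.
by apply: layer_path => //; rewrite layer0.
Qed.

Definition depth v := ex_minn (reach v).

Lemma depthP v : v \in layer (depth v).
Proof. by rewrite /depth; case: ex_minnP. Qed.

Lemma depth_min v n : v \in layer n -> (depth v <= n)%N.
Proof. by rewrite /depth; case: ex_minnP => m _ h /h. Qed.

Lemma depth_r : depth r = 0%N.
Proof. by apply/eqP; rewrite -leqn0; apply: depth_min; rewrite layer0. Qed.

Lemma depth0 v : depth v = 0%N -> v = r.
Proof. by move=> d0; have := depthP v; rewrite d0 layer0 => /eqP. Qed.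

Lemma depth_edge x y : e x y -> (depth y <= (depth x).+1)%N.
Proof.
move=> exy; apply: depth_min; rewrite layerS; apply/orP; right.
by apply/existsP; exists x; rewrite depthP.
Qed.

Lemma depth_par_ex v : v != r -> exists x, e x v && (depth x == (depth v).-1).
Proof.
move=> vr; case dv: (depth v) => [|d]; first by move: vr; rewrite (depth0 dv) eqxx.
have := depthP v; rewrite dv layerS => /orP [vd|/existsP [x /andP [xd exv]]].
  by have := depth_min vd; rewrite dv ltnn.
exists x; rewrite exv /=; have := depth_min xd; have := depth_edge exv.
rewrite dv => h1 h2; apply/eqP; lia.
Qed.

Definition par v := odflt r [pick x | (v != r) && e x v && (depth x == (depth v).-1)].

Lemma par_r : par r = r.
Proof. by rewrite /par; case: pickP => //= x; rewrite eqxx. Qed.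

Lemma par_spec v : v != r -> e (par v) v /\ depth v = (depth (par v)).+1.
Proof.
move=> vr; rewrite /par; case: pickP => [x /andP[/andP[_ exv] /eqP dx]|none] /=.
  split => //; rewrite dx prednK // lt0n; apply/negP => /eqP /depth0 /eqP.
  by rewrite (negbTE vr).
exfalso; have [x /andP [exv dx]] := depth_par_ex vr.
by have := none x; rewrite vr exv dx.
Qed.

Lemma depth_par v : depth (par v) = (depth v).-1.
Proof.
have [->|vr] := eqVneq v r; first by rewrite par_r depth_r.
by have [_ ->] := par_spec vr.
Qed.

Definition anc v k := iter k par v.

Lemma depth_anc v k : depth (anc v k) = (depth v - k)%N.
Proof.
elim: k => [|k IH]; first by rewrite subn0.
by rewrite /anc iterS -/(anc v k) depth_par IH subnS.
Qed.

Lemma anc_ne_r v k : (k < depth v)%N -> anc v k != r.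
Proof.
move=> h; apply/eqP => ar; have := depth_anc v k; rewrite ar depth_r; lia.
Qed.

Lemma anc_big v k : (depth v <= k)%N -> anc v k = r.
Proof. by move=> h; apply: depth0; rewrite depth_anc; lia. Qed.

Lemma anc_inj v k l : (k <= depth v)%N -> (l <= depth v)%N -> anc v k = anc v l -> k = l.
Proof. by move=> hk hl eq; have := congr1 depth eq; rewrite !depth_anc; lia. Qed.

Lemma e_par v : v != r -> e v (par v).
Proof. by move=> vr; rewrite esym; case: (par_spec vr). Qed.

Lemma edge_par u v : e u v -> (u != r /\ par u = v) \/ (v != r /\ par v = u).
Proof.
move=> euv.
case: (boolP ((u != r) && (par u == v))) => [/andP[h1 /eqP h2]|hu]; first by left.
case: (boolP ((v != r) && (par v == u))) => [/andP[h1 /eqP h2]|hv]; first by right.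
exfalso.
pose P s := [exists k : 'I_s.+1, anc u k == anc v (s - k)].
have Pex : exists s, P s.
  exists (depth u + depth v)%N; apply/existsP.
  have hk : (depth u < (depth u + depth v).+1)%N by lia.
  exists (Ordinal hk) => /=; rewrite anc_big // anc_big //; lia.
have [s Ps smin] := ex_minnP Pex.
have {}smin : forall i' j', anc u i' = anc v j' -> (s <= i' + j')%N.
  move=> i' j' h; apply: smin; apply/existsP.
  have hk : (i' < (i' + j').+1)%N by lia.
  by exists (Ordinal hk) => /=; rewrite h addKn.
move/existsP: Ps => [[i /= ltis] /eqP uv].
have iu : (i <= depth u)%N.
  rewrite leqNgt; apply/negP => h.
  have e1 : anc u (depth u) = anc v (s - i) by rewrite -uv !anc_big //; lia.
  by have := smin _ _ e1; lia.
have jv : (s - i <= depth v)%N.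
  rewrite leqNgt; apply/negP => h.
  have e1 : anc u i = anc v (depth v) by rewrite uv !anc_big //; lia.
  by have := smin _ _ e1; lia.
pose f k := if (k <= i)%N then anc u k else anc v (s - k).
have fR k : (i <= k <= s)%N -> f k = anc v (s - k).
  rewrite /f; case: ifP => // ki /andP[ik _].
  by have -> : k = i by lia.
have f0 : f 0%N = u by rewrite /f leq0n.
have fs : f s = v by rewrite fR ?subnn // leqnn; lia.
have s2 : (2 <= s)%N.
  rewrite leqNgt; apply/negP => s1.
  have : [|| (i == 0%N) && (s == 0%N), (i == 0%N) && (s == 1%N) | (i == 1%N) && (s == 1%N)] by lia.
  case/or3P => /andP[/eqP i0 /eqP s0]; move: uv; rewrite i0 s0 ?subn0 ?subnn /anc /=.
  - by move=> uv; move: euv; rewrite uv eirr.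
  - move=> uv; move: hv; rewrite -uv.
    have [vr|vr] := eqVneq v r; last by rewrite eqxx.
    by move: uv; rewrite vr par_r => ur; move: euv; rewrite ur vr eirr.
  - move=> uv; move: hu; rewrite uv.
    have [ur|ur] := eqVneq u r; last by rewrite eqxx.
    by move: uv; rewrite ur par_r => vr; move: euv; rewrite -vr ur eirr.
apply: (eacyc (c := mkseq f s.+1)); first by rewrite size_mkseq.
apply/andP; split.
  apply: cycle_mkseq; last by rewrite fs f0 esym.
  move=> k ks; have [ki|ik] := ltnP k i.
    rewrite /f ki ltnW //; rewrite /anc iterS -/(anc u k).
    by apply: e_par; apply: anc_ne_r; lia.
  rewrite !fR; [|lia|lia].
  have -> : (s - k = (s - k.+1).+1)%N by lia.
  rewrite /anc iterS -/(anc v (s - k.+1)) esym; apply: e_par.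
  by apply: anc_ne_r; lia.
apply/mkseq_uniqP => k l; rewrite !inE => ks ls.
have [ki|ik] := leqP k i; have [li|il] := leqP l i.
- by rewrite /f ki li; apply: anc_inj; lia.
- rewrite /f ki leqNgt il /= => h; have := smin _ _ h; lia.
- rewrite /f li leqNgt ik /= => h; have := smin _ _ (Logic.eq_sym h); lia.
- rewrite !fR; [|lia|lia] => h; have := anc_inj _ _ h; lia.
Qed.


Variable R : realType.

Definition UT : set ('I_N -> R) :=
  [set a | forall v, v != r -> 0 < a v - a (par v) < pi *+ 2].

Lemma UT_conv a b : UT a -> UT b -> forall s, 0 <= s <= 1 ->
  UT (fun i => (1 - s) * a i + s * b i).
Proof.
move=> Ua Ub s s01 v vr.
have -> : (1 - s) * a v + s * b v - ((1 - s) * a (par v) + s * b (par v)) =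
  (1 - s) * (a v - a (par v)) + s * (b v - b (par v)) by ring.
exact: conv_itv (Ua v vr) (Ub v vr) s01.
Qed.

Lemma PsiUT_sub : @Psi R N @` UT `<=` config_space R e.
Proof.
move=> _ [a Ua <-]; split => [i|i j eij]; first exact: circle_ang.
rewrite /Psi => h.
case: (edge_par eij) => [[ir pij]|[jr pji]].
  have := Ua i ir; rewrite pij => hi; have := ang_eq_cos h.
  by apply/eqP; apply: cos_neq1.
have := Ua j jr; rewrite pji => hj; have := ang_eq_cos (Logic.eq_sym h).
by apply/eqP; apply: cos_neq1.
Qed.

Lemma config_sub_PsiUT : config_space R e `<=` @Psi R N @` UT.
Proof.
move=> th [thc thne].
have [t0 ht0] := ang_exists (thc r).
pose g v k := arg0 (relp (th (anc v k.+1)) (th (anc v k))).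
pose a v := t0 + \sum_(k < depth v) g v k.
have aS v : v != r -> a v = a (par v) + arg0 (relp (th (par v)) (th v)).
  move=> vr; have [_ dv] := par_spec vr.
  rewrite /a dv big_ord_recl.
  have -> : g v ord0 = arg0 (relp (th (par v)) (th v)) by [].
  have -> : \sum_(i < depth (par v)) g v (lift ord0 i) = \sum_(i < depth (par v)) g (par v) i.
    by apply: eq_bigr => k _; rewrite /g /anc /= -!iterSr.
  by rewrite [arg0 _ + _]addrC addrA.
have rne v : v != r -> (relp (th (par v)) (th v)).1 != 1.
  move=> vr; apply/eqP => h1; have := rel_eq1 (thc _) (thc _) h1.
  by apply: thne; case: (par_spec vr).
exists a.
  move=> v vr; rewrite aS // addrC addKr.
  by rewrite arg0_gt0 arg0_lt.
apply/funext => v.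
suff H : forall n v, depth v = n -> ang (a v) = th v by exact: H.
elim => [|n IH] {}v dv.
  rewrite (depth0 dv) /a depth_r big_ord0 addr0 //.
have vr : v != r by apply/eqP => vr; move: dv; rewrite vr depth_r.
have [ep dv'] := par_spec vr.
rewrite aS //; symmetry; apply: rot_rel (thc v) _.
rewrite (IH (par v)); last by move: dv; rewrite dv' => -[].
by rewrite ang_arg0 //; [exact: rel_circle (thc _) (thc _)|exact: rne].
Qed.

Lemma config_PsiUT : config_space R e = @Psi R N @` UT.
Proof. by apply/seteqP; split; [exact: config_sub_PsiUT|exact: PsiUT_sub]. Qed.

Lemma config_tree_connected : connected (config_space R e).
Proof. rewrite config_PsiUT; apply: conv_connected; exact: UT_conv. Qed.

Lemma config_tree_nonempty : config_space R e !=set0.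
Proof.
rewrite config_PsiUT; exists (@Psi R N (fun v => pi * (depth v)%:R)).
exists (fun v => pi * (depth v)%:R) => // v vr.
have [_ ->] := par_spec vr.
rewrite -addn1 natrD mulrDr mulr1 addrAC subrr add0r mulr2n.
by have := pi_gt0 R; lra.
Qed.

Lemma tree_components : components (config_space R e) = [set config_space R e].
Proof.
have [x0 Ax0] := config_tree_nonempty.
apply/seteqP; split.
  by move=> _ [x Ax <-]; rewrite /= connected_component_id //; exact: config_tree_connected.
move=> _ ->; exists x0 => //; rewrite connected_component_id //.
exact: config_tree_connected.
Qed.

End Tree.

Section Cyc.
Variables (R : realType) (n : nat).
Local Notation N := n.+1.

Definition Fc (th : {ptws 'I_N -> (R * R)%type}) : R :=
  \sum_(k < n) arg0 (relp (th (inord k)) (th (inord k.+1))) +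
  arg0 (relp (th (inord n)) (th (inord 0))).

Definition Vm (m : nat) : set ('I_N -> R) :=
  [set a | (forall k, (k < n)%N -> 0 < a (inord k.+1) - a (inord k) < pi *+ 2) /\
           0 < a (inord 0) + pi *+ 2 * m%:R - a (inord n) < pi *+ 2].

Lemma Vm_conv m a b : Vm m a -> Vm m b -> forall s, 0 <= s <= 1 ->
  Vm m (fun i => (1 - s) * a i + s * b i).
Proof.
move=> [a1 a2] [b1 b2] s s01; split.
  move=> k kn.
  have -> : (1 - s) * a (inord k.+1) + s * b (inord k.+1) - ((1 - s) * a (inord k) + s * b (inord k)) =
    (1 - s) * (a (inord k.+1) - a (inord k)) + s * (b (inord k.+1) - b (inord k)) by ring.
  exact: conv_itv (a1 k kn) (b1 k kn) s01.
have -> : (1 - s) * a (inord 0) + s * b (inord 0) + pi *+ 2 * m%:R - ((1 - s) * a (inord n) + s * b (inord n)) =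
  (1 - s) * (a (inord 0) + pi *+ 2 * m%:R - a (inord n)) + s * (b (inord 0) + pi *+ 2 * m%:R - b (inord n)) by ring.
exact: conv_itv a2 b2 s01.
Qed.

Lemma Fc_Psi m a : Vm m a -> Fc (@Psi R N a) = pi *+ 2 * m%:R.
Proof.
move=> [h1 h2]; rewrite /Fc /Psi.
rewrite (eq_bigr (fun k : 'I_n => a (inord k.+1) - a (inord k))); last first.
  by move=> k _; rewrite rel_ang arg0_ang //; exact: h1 k (ltn_ord k).
rewrite -(big_mkord xpredT (fun k => a (inord k.+1) - a (inord k))).
rewrite (telescope_sumr (fun k => a (inord k))) // rel_ang.
rewrite -(ang_periodn (a (inord 0) - a (inord n)) m) arg0_ang; last first.
  by move: h2; rewrite addrAC.
ring.
Qed.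

Lemma Psi_edge m a (i j : 'I_N) : Vm m a -> val j = ((val i).+1 %% N)%N ->
  @Psi R N a i <> @Psi R N a j.
Proof.
move=> [h1 h2] ji; rewrite /Psi => h.
have [ilt|ige] := ltnP i n.
  have ji' : j = inord i.+1 by apply: val_inj; rewrite ji /= inordK ?modn_small.
  have ii : i = inord i by rewrite inord_val.
  have := ang_eq_cos (Logic.eq_sym h); rewrite ji' {2}ii.
  by apply/eqP; apply: cos_neq1; exact: h1.
have ii : i = inord n by apply: val_inj; rewrite /= inordK //; have := ltn_ord i; lia.
have jj : j = inord 0 by apply: val_inj; rewrite ji ii /= !inordK // modnn.
move: h; rewrite jj ii -(ang_periodn (a (inord 0)) m) => h.
have := ang_eq_cos (Logic.eq_sym h).
by apply/eqP; apply: cos_neq1.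
Qed.

Lemma PsiVm_sub m : @Psi R N @` Vm m `<=` config_space R (cycle_graph N).
Proof.
move=> _ [a Va <-]; split => [i|i j]; first exact: circle_ang.
rewrite /cycle_graph => /orP [/eqP ji | /eqP ij]; first exact: Psi_edge Va ji.
by move=> h; apply: (Psi_edge Va ij); rewrite h.
Qed.

End Cyc.

Section Cyc2.
Variables (R : realType) (n : nat).
Local Notation N := n.+1.

Lemma config_sub_Vm (th : {ptws 'I_N -> (R * R)%type}) :
  config_space R (cycle_graph N) th ->
  exists m, [/\ (0 < m <= n)%N, Fc th = pi *+ 2 * m%:R & (@Psi R N @` Vm m) th].
Proof.
move=> [thc thne].
have eS k : (k < n)%N -> th (inord k) <> th (inord k.+1).
  move=> kn; apply: thne; rewrite /cycle_graph; apply/orP; left.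
  by rewrite /= !inordK ?modn_small //; lia.
have eL : th (inord n) <> th (inord 0).
  apply: thne; rewrite /cycle_graph; apply/orP; left.
  by rewrite /= !inordK // modnn.
have [t0 ht0] := ang_exists (thc (inord 0)).
pose A k := t0 + \sum_(j < k) arg0 (relp (th (inord j)) (th (inord j.+1))).
have AS k : A k.+1 = A k + arg0 (relp (th (inord k)) (th (inord k.+1))).
  by rewrite /A big_ord_recr addrA.
have A0 : A 0%N = t0 by rewrite /A big_ord0 addr0.
have rne k : (k < n)%N -> (relp (th (inord k)) (th (inord k.+1))).1 != 1.
  by move=> kn; apply/eqP => h1; apply: (eS k kn); exact: rel_eq1 (thc _) (thc _) h1.
have angA k : (k <= n)%N -> ang (A k) = th (inord k).
  elim: k => [|k IH] kn; first by rewrite A0.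
  rewrite AS; symmetry; apply: rot_rel (thc _) _.
  rewrite IH; last exact: ltnW.
  rewrite ang_arg0 //; first exact: rel_circle (thc _) (thc _).
  exact: rne.
set D := arg0 (relp (th (inord n)) (th (inord 0))).
have rA : relp (th (inord n)) (th (inord 0)) = ang (A 0%N - A n).
  by rewrite -angA // -(angA 0%N) // rel_ang.
have cne : cos (A 0%N - A n) != 1.
  apply/eqP => h1; apply: eL; apply: rel_eq1 (thc _) (thc _) _.
  by rewrite rA.
have [k hk] := arg0_ang_mod cne.
have DA : D = A 0%N - A n + pi *+ 2 * k%:~R by rewrite /D rA.
have FcA : Fc th = pi *+ 2 * k%:~R.
  rewrite /Fc -/D DA.
  have -> : \sum_(j < n) arg0 (relp (th (inord j)) (th (inord j.+1))) = A n - A 0%N.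
    by rewrite A0 /A addrC addKr.
  by ring.
have Fpos : 0 < Fc th.
  rewrite /Fc; apply: ltr_wpDl; last exact: arg0_gt0.
  by apply: sumr_ge0 => j _; apply: ltW; exact: arg0_gt0.
have Flt : Fc th < pi *+ 2 * n%:R + pi *+ 2.
  rewrite /Fc; apply: ler_ltD; last exact: arg0_lt.
  have -> : pi *+ 2 * n%:R = \sum_(j < n) (pi *+ 2 : R).
    by rewrite sumr_const card_ord mulr_natr.
  by apply: ler_sum => j _; apply: ltW; exact: arg0_lt.
have T0 : 0 < pi *+ 2 :> R by rewrite mulr2n; have := pi_gt0 R; lra.
case: k hk DA FcA => m; last first.
  move=> _ _ FcA; exfalso; move: Fpos; rewrite FcA NegzE intrN mulrN oppr_gt0.
  by rewrite pmulr_rlt0 // ltrz0.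
move=> hk DA FcA.
have {}FcA : Fc th = pi *+ 2 * m%:R by rewrite FcA.
exists m; split => //.
  move: Fpos Flt; rewrite FcA pmulr_rgt0 // ltr0n => m0.
  move=> h; have h' : (m%:R : R) < (n.+1)%:R.
    by rewrite -natr1 -(ltr_pM2l T0) mulrDr mulr1.
  by move: h'; rewrite ltr_nat ltnS => ->; rewrite m0.
exists (fun i : 'I_N => A i); last first.
  apply/funext => i; rewrite /Psi angA; last by rewrite -ltnS.
  by rewrite inord_val.
split.
  move=> j jn.
  have j1 : (j.+1 < N)%N by rewrite ltnS.
  have j2 : (j < N)%N by rewrite ltnS ltnW.
  rewrite !inordK //.
  by rewrite AS addrC addKr arg0_gt0 arg0_lt.
rewrite !inordK //.
have -> : A 0%N + pi *+ 2 * m%:R - A n = D by rewrite DA; ring.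
by rewrite arg0_gt0 arg0_lt.
Qed.

End Cyc2.

Section Cont.
Variable R : realType.

Lemma arg0_cont (p : (R * R)%type) : p.1 != 1 -> {for p, continuous (@arg0 R)}.
Proof.
move=> p1; rewrite /arg0.
apply: cvgB; first exact: cvg_cst.
apply: cvgM; first exact: cvg_cst.
apply: (@continuous_comp _ _ _ (fun q : (R * R)%type => q.2 / (1 - q.1)) (@atan R) p _ (@continuous_atan R _)).
apply: cvgM; first exact: cvg_snd.
apply: cvgV; first by rewrite subr_eq0 eq_sym.
apply: cvgB; first exact: cvg_cst.
exact: cvg_fst.
Qed.

Lemma sum_cont (X : topologicalType) (x : X) (h : nat -> X -> R) n :
  (forall k, (k < n)%N -> h k y @[y --> x] --> h k x) ->
  (\sum_(k < n) h k y) @[y --> x] --> \sum_(k < n) h k x.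
Proof.
elim: n => [|n IH] hc.
  have -> : (fun y => \sum_(k < 0) h k y) = (fun _ => 0) by apply/funext => y; rewrite big_ord0.
  rewrite big_ord0; exact: cvg_cst.
have -> : (fun y => \sum_(k < n.+1) h k y) = (fun y => \sum_(k < n) h k y + h n y).
  by apply/funext => y; rewrite big_ord_recr.
rewrite big_ord_recr /=.
apply: cvgD; last exact: hc.
by apply: IH => k kn; apply: hc; rewrite ltnS ltnW.
Qed.

Variable N : nat.

Lemma coord1_cont (i : 'I_N) :
  continuous (fun th : {ptws 'I_N -> (R * R)%type} => (th i).1).
Proof.
move=> th; apply: (continuous_comp (@proj_continuous 'I_N (fun _ => (R * R)%type) i th)).
exact: cvg_fst.
Qed.

Lemma coord2_cont (i : 'I_N) :
  continuous (fun th : {ptws 'I_N -> (R * R)%type} => (th i).2).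
Proof.
move=> th; apply: (continuous_comp (@proj_continuous 'I_N (fun _ => (R * R)%type) i th)).
exact: cvg_snd.
Qed.

Lemma relp_cont (i j : 'I_N) :
  continuous (fun th : {ptws 'I_N -> (R * R)%type} => relp (th i) (th j)).
Proof.
move=> th; rewrite /relp.
apply: (@cvg_pair _ _ _ (nbhs th) (nbhs ((th i).1 * (th j).1 + (th i).2 * (th j).2))
  (nbhs ((th i).1 * (th j).2 - (th i).2 * (th j).1))).
  by apply: cvgD; apply: cvgM; [exact: (@coord1_cont i th)|exact: (@coord1_cont j th)|
    exact: (@coord2_cont i th)|exact: (@coord2_cont j th)].
by apply: cvgB; apply: cvgM; [exact: (@coord1_cont i th)|exact: (@coord2_cont j th)|
    exact: (@coord2_cont i th)|exact: (@coord1_cont j th)].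
Qed.

Lemma term_cont (i j : 'I_N) (th : {ptws 'I_N -> (R * R)%type}) :
  (relp (th i) (th j)).1 != 1 ->
  {for th, continuous (fun th : {ptws 'I_N -> (R * R)%type} => arg0 (relp (th i) (th j)))}.
Proof.
move=> h; apply: (continuous_comp (@relp_cont i j th)).
exact: arg0_cont.
Qed.

End Cont.

Lemma rel1_ne (R : realType) (p q : (R * R)%type) :
  @circle R p -> @circle R q -> p <> q -> (relp p q).1 != 1.
Proof. by move=> cp cq pq; apply/eqP => h; apply: pq; exact: rel_eq1 cp cq h. Qed.

Lemma nat_half (R : realType) (a b : nat) : pi *+ 2 * a%:R = pi *+ 2 * b%:R + pi :> R -> False.
Proof.
move=> h.
have E k : pi *+ 2 * k%:R = pi * (2 * k)%:R :> R by rewrite natrM mulrA [pi * _]mulr_natr.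
have : pi * (2 * a)%:R = pi * (2 * b).+1%:R :> R.
  by rewrite -E h E -natr1 mulrDr mulr1.
move/(mulfI (lt0r_neq0 (pi_gt0 R)))/eqP; rewrite eqr_nat => /eqP; lia.
Qed.

Section CycFin.
Variables (R : realType) (n : nat).
Local Notation N := n.+1.
Local Notation A := (config_space R (cycle_graph N)).
Local Notation L m := (@Psi R N @` Vm m).

Lemma cyc_edge1 k : (k < n)%N -> cycle_graph N (inord k) (inord k.+1).
Proof.
move=> kn; rewrite /cycle_graph; apply/orP; left.
by rewrite /= !inordK ?modn_small //; lia.
Qed.

Lemma cyc_edge2 : cycle_graph N (inord n) (inord 0).
Proof. by rewrite /cycle_graph; apply/orP; left; rewrite /= !inordK // modnn. Qed.

Lemma Fc_cont th : A th -> {for th, continuous (@Fc R n)}.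
Proof.
move=> [thc thne].
have -> : @Fc R n = (fun th : {ptws 'I_N -> (R * R)%type} =>
    \sum_(k < n) arg0 (relp (th (inord k)) (th (inord k.+1)))) \+
  (fun th : {ptws 'I_N -> (R * R)%type} => arg0 (relp (th (inord n)) (th (inord 0)))) by [].
apply: continuousD.
  apply: (@sum_cont R _ th (fun k th => arg0 (relp (th (inord k)) (th (inord k.+1))))).
  move=> k kn; apply: term_cont; apply: rel1_ne => //.
  exact: thne (cyc_edge1 kn).
apply: term_cont; apply: rel1_ne => //.
exact: thne cyc_edge2.
Qed.

Lemma L_connected m : connected (L m).
Proof. apply: conv_connected; exact: Vm_conv. Qed.

Lemma comp_eq th : A th -> exists m, [/\ (0 < m <= n)%N, Fc th = pi *+ 2 * m%:R &
  connected_component A th = L m].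
Proof.
move=> Ath; have [m [hm Fm Lth]] := config_sub_Vm Ath.
exists m; split => //.
apply/seteqP; split; last first.
  by apply: connected_component_max => //; [exact: PsiVm_sub|exact: L_connected].
set C := connected_component A th.
have Cc : connected C by exact: component_connected.
have CA : C `<=` A by exact: connected_component_sub.
have Fcc : {within C, continuous (@Fc R n)}.
  apply: continuous_in_subspaceT => x; rewrite inE => Cx.
  exact: Fc_cont (CA _ Cx).
have /connected_intervalP FC := connected_continuous_connected Cc Fcc.
have Cth : C th by exact: connected_component_refl.
move=> ph Cph; have [m' [hm' Fm' Lph]] := config_sub_Vm (CA _ Cph).
suff -> : m = m' by [].
apply/eqP; apply/negP => /negP mm.
have T0 : 0 < pi *+ 2 :> R by rewrite mulr2n; have := pi_gt0 R; lra.
have pi0 := pi_gt0 R.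
have [lt|lt] := ltnP m m'.
  have : (@Fc R n @` C) (pi *+ 2 * m%:R + pi).
    apply: (FC (pi *+ 2 * m%:R) (pi *+ 2 * m'%:R)); [by exists th|by exists ph|].
    apply/andP; split; first by lra.
    have : (m + 1 <= m')%N by rewrite addn1.
    rewrite -(ler_nat R) natrD => h.
    have := ler_pM2l T0 ((m%:R + 1)) m'%:R; rewrite h => /esym h2.
    by move: h2; rewrite mulrDr mulr1 mulr2n; lra.
  move=> [ps Cps Fps]; have [m'' [_ Fm'' _]] := config_sub_Vm (CA _ Cps).
  by apply: (@nat_half R m'' m); rewrite -Fm'' Fps.
have lt' : (m' < m)%N by rewrite ltn_neqAle lt andbT eq_sym.
have : (@Fc R n @` C) (pi *+ 2 * m'%:R + pi).
  apply: (FC (pi *+ 2 * m'%:R) (pi *+ 2 * m%:R)); [by exists ph|by exists th|].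
  apply/andP; split; first by lra.
  have : (m' + 1 <= m)%N by rewrite addn1.
  rewrite -(ler_nat R) natrD => h.
  have := ler_pM2l T0 ((m'%:R + 1)) m%:R; rewrite h => /esym h2.
  by move: h2; rewrite mulrDr mulr1 mulr2n; lra.
move=> [ps Cps Fps]; have [m'' [_ Fm'' _]] := config_sub_Vm (CA _ Cps).
by apply: (@nat_half R m'' m'); rewrite -Fm'' Fps.
Qed.

End CycFin.

Section CycFin2.
Variables (R : realType) (n : nat).
Local Notation N := n.+1.
Local Notation A := (config_space R (cycle_graph N)).
Local Notation L m := (@Psi R N @` Vm m).

Lemma L_nonempty m : (0 < m <= n)%N -> L m !=set0.
Proof.
move=> /andP[m0 mn].
have T0 : 0 < pi *+ 2 :> R by rewrite mulr2n; have := pi_gt0 R; lra.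
set c : R := pi *+ 2 * m%:R / N%:R.
have N0 : 0 < N%:R :> R by rewrite ltr0n.
have c0 : 0 < c by rewrite /c divr_gt0 // mulr_gt0 // ltr0n.
have cT : c < pi *+ 2.
  rewrite /c ltr_pdivrMr // ltr_pM2l // ltr_nat; lia.
have Nc : N%:R * c = pi *+ 2 * m%:R by rewrite /c mulrC divfK // gt_eqF.
exists (@Psi R N (fun i => (val i)%:R * c)); exists (fun i => (val i)%:R * c) => //.
split.
  move=> k kn.
  have j1 : (k.+1 < N)%N by rewrite ltnS.
  have j2 : (k < N)%N by rewrite ltnS ltnW.
  rewrite /= !inordK //.
  by rewrite -natr1 mulrDl mul1r addrAC subrr add0r c0 cT.
rewrite /= !inordK // mul0r add0r.
have -> : pi *+ 2 * m%:R - n%:R * c = c by rewrite -Nc -natr1 mulrDl mul1r addrAC subrr add0r.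
by rewrite c0 cT.
Qed.

Lemma Fc_L m th : L m th -> @Fc R n th = pi *+ 2 * m%:R.
Proof. by move=> [a Va <-]; exact: Fc_Psi Va. Qed.

Lemma Tm_inj (a b : nat) : pi *+ 2 * a%:R = pi *+ 2 * b%:R :> R -> a = b.
Proof.
have T0 : 0 < pi *+ 2 :> R by rewrite mulr2n; have := pi_gt0 R; lra.
by move/(mulfI (lt0r_neq0 T0))/eqP; rewrite eqr_nat => /eqP.
Qed.

Lemma cyc_components : components A = (fun k => L k.+1) @` `I_n.
Proof.
apply/seteqP; split.
  move=> _ [th Ath <-]; have [m [hm Fm ->]] := comp_eq Ath.
  exists m.-1; first by rewrite /= prednK //; [case/andP: hm|case/andP: hm]; lia.
  by rewrite prednK //; case/andP: hm.
move=> _ [k kn <-].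
have hk : (0 < k.+1 <= n)%N by rewrite /=; exact: kn.
have [th Lth] := L_nonempty hk.
have Ath : A th by exact: PsiVm_sub Lth.
exists th => //; have [m [hm Fm ->]] := comp_eq Ath.
by rewrite (Tm_inj (etrans (Logic.eq_sym Fm) (Fc_L Lth))).
Qed.

Lemma cyc_card : (components A #= `I_n)%card.
Proof.
rewrite cyc_components; apply: inj_card_eq => k l; rewrite !inE /= => kn ln e.
have hk : (0 < k.+1 <= n)%N by exact: kn.
have [th Lth] := L_nonempty hk.
have Lth' : L l.+1 th by rewrite -e.
by have := Tm_inj (etrans (Logic.eq_sym (Fc_L Lth)) (Fc_L Lth')) => -[].
Qed.

End CycFin2.

Local Close Scope ring_scope.
Local Open Scope classical_set_scope.
Local Open Scope card_scope.

Theorem proposition1 (R : realType) :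
  (forall (N : nat) (e : rel 'I_N), (1 <= N)%N -> simple_graph e -> is_tree e ->
     components (config_space R e) #= `I_1) /\
  (forall N : nat, (3 <= N)%N ->
     components (config_space R (cycle_graph N)) #= `I_(N - 1)).
Proof.
split.
  move=> N e N1 [eirr esym] [econn eacyc].
  rewrite (tree_components (Ordinal N1) eirr esym econn eacyc R).
  exact: card_set1.
case=> [|n] N3 //.
rewrite subSS subn0.
exact: cyc_card.
Qed.
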